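(* Let $p$ be an odd prime and $n,k$ positive integers with $\gcd(n,k)=s$. If $n/s$ is odd, then $\gcd(p^n-1,d)=1$ for $d=(p^{2k}+1)/2$ and for $d=p^{2k}-p^k+1$. *)

(* Defs.v *)
From mathcomp Require Import all_boot.

(* Main.v *)
Require Import Defs.
From mathcomp Require Import all_boot zify.

Lemma pow_gcd_mod g x a b : x^a = 1 %[mod g] -> x^b = 1 %[mod g] ->
  x^(gcdn a b) = 1 %[mod g].
Proof.
move: {2}(a + b) (leqnn (a + b)) => N; elim: N a b => [|N IH] a b.
  by rewrite leqn0 addn_eq0 => /andP[/eqP-> /eqP->].
wlog lab : a b / a <= b.
  move=> W hN Ha Hb; case: (leqP a b) => l; first exact: W.
  rewrite gcdnC; apply: W => //; [exact: ltnW | by rewrite addnC].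
move=> hN Ha Hb.
case: a lab hN Ha => [|a] lab hN Ha; first by rewrite gcd0n.
have [c eb] : exists c, b = c + a.+1 by exists (b - a.+1); rewrite subnK.
subst b.
rewrite gcdnDr; apply: IH => //; first lia.
by move: Hb; rewrite expnD -modnMmr Ha modnMmr muln1.
Qed.

Lemma key n k m : 0 < n -> odd (n %/ gcdn n k) -> k %| m -> gcdn n (2*m) %| m.
Proof.
move=> n0 hodd km.
set s := gcdn n k in hodd.
have sn : s %| n by exact: dvdn_gcdl.
have sm : s %| m by apply: dvdn_trans km; exact: dvdn_gcdr.
rewrite -(divnK sn) -(divnK sm) mulnA -muln_gcdl.
apply: dvdn_mul => //.
rewrite mulnC Gauss_gcdl ?dvdn_gcdr //.
by rewrite coprimen2.
Qed.

Lemma core g x n m : 0 < x -> odd g -> g %| x^n - 1 -> g %| x^m + 1 ->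
  gcdn n (2*m) %| m -> g = 1.
Proof.
move=> x0 og hn hm ht.
have Hn : x^n = 1 %[mod g] by apply/eqP; rewrite eqn_mod_dvd // expn_gt0 x0.
have H2 : x^(2*m) = 1 %[mod g].
  apply/eqP; rewrite eqn_mod_dvd ?expn_gt0 ?x0 //.
  by rewrite mulnC expnM -{2}(exp1n 2) subn_sqr dvdn_mull.
have Ht := pow_gcd_mod _ _ _ _ Hn H2.
have Hm : x^m = 1 %[mod g].
  by rewrite -(divnK ht) mulnC expnM -modnXm Ht modnXm exp1n.
have g2 : g %| 2.
  move: hm; rewrite /dvdn -modnDml Hm modnDml //.
have : gcdn g 2 = 1 by apply/eqP; rewrite -/(coprime g 2) coprimen2.
by move/gcdn_idPl: g2 => ->.
Qed.
Lemma odd_d1 x : odd x -> odd ((x^2 + 1) %/ 2).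
Proof.
move=> ox; rewrite -(odd_double_half x) ox.
set y := x./2.
have -> : ((true + y.*2)^2 + 1) = (2*y*(y+1)+1)*2 by rewrite -!muln2; simpl; nia.
by rewrite mulnK // oddD oddM mul2n odd_double.
Qed.
Lemma dummy : True.
exact I.
Qed.
Lemma odd_d2 x : odd x -> odd (x^2 - x + 1).
Proof.
move=> ox; rewrite -(odd_double_half x) ox.
set y := x./2.
have -> : ((true + y.*2)^2 - (true + y.*2) + 1) = 2*(y*(2*y+1))+1 by rewrite -!muln2; simpl; nia.
by rewrite oddD oddM /=.
Qed.
Lemma fact3 x : x^3 + 1 = (x+1)*(x^2 - x + 1).
Proof. nia. Qed.

Lemma odd_div g d : g %| d -> odd d -> odd g.
Proof.
move=> gd od; apply: contraLR od; rewrite -!dvdn2 => h2.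
exact: dvdn_trans h2 gd.
Qed.

Theorem mainTheorem4 (p n k : nat) :
  prime p -> odd p -> 0 < n -> 0 < k ->
  odd (n %/ gcdn n k) ->
  gcdn (p ^ n - 1) ((p ^ (2 * k) + 1) %/ 2) = 1 /\
  gcdn (p ^ n - 1) (p ^ (2 * k) - p ^ k + 1) = 1.
Proof.
move=> pp op n0 k0 hodd.
have p0 : 0 < p by exact: prime_gt0.
have ox : odd (p ^ k) by rewrite oddX op orbT.
have e2 : p ^ (2 * k) = (p ^ k) ^ 2 by rewrite mulnC expnM.
split.
- have od : odd ((p ^ (2 * k) + 1) %/ 2) by rewrite e2; exact: odd_d1.
  apply: (core _ p n (2 * k) p0).
  + apply: odd_div od; exact: dvdn_gcdr.
  + exact: dvdn_gcdl.
  + apply: dvdn_trans (dvdn_gcdr _ _) _.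
    have h2 : 2 %| p ^ (2 * k) + 1 by rewrite dvdn2 oddD e2 oddX ox.
    by rewrite -{2}(divnK h2) dvdn_mulr.
  + by apply: key n0 hodd _; rewrite dvdn_mull.
- have od : odd (p ^ (2 * k) - p ^ k + 1) by rewrite e2; exact: odd_d2.
  apply: (core _ p n (3 * k) p0).
  + apply: odd_div od; exact: dvdn_gcdr.
  + exact: dvdn_gcdl.
  + apply: dvdn_trans (dvdn_gcdr _ _) _.
    by rewrite e2 mulnC expnM fact3 dvdn_mull.
  + by apply: key n0 hodd _; rewrite dvdn_mull.
Qed.
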